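(* Let $\{\boldsymbol y^{MSLP}_n\}_{n\in\mathcal T}$, $\{u^{MSLP}_n\}_{n\in\mathcal T\setminus\{1\}}$ be the values of the $\boldsymbol y$- and $u$-variables in an optimal solution of the linear programming relaxation of the multistage model (integrality of $\boldsymbol x$ dropped). Define $\boldsymbol x^{MS}_1=\boldsymbol B_{t_1}\boldsymbol y^{MSLP}_1$, $\boldsymbol x^{MS}_n=\max_{m\in\mathcal P(n)}\boldsymbol B_{t_m}\boldsymbol y^{MSLP}_m-\max_{m\in\mathcal P(a(n))}\boldsymbol B_{t_m}\boldsymbol y^{MSLP}_m$ ($n\ne1$), $\eta^{MS}_n=\max_{m\in\mathcal C(n)}\{\boldsymbol f_{t_m}^{\mathsf T}\sum_{l\in\mathcal P(m)}\boldsymbol x^{MS}_l+\boldsymbol c_{t_m}^{\mathsf T}\boldsymbol y^{MSLP}_m-u^{MSLP}_m\}$ ($n\notin\mathcal L$), $\boldsymbol x^{TS}_1=\lceil\boldsymbol B_{t_1}\boldsymbol y^{MSLP}_1\rceil$, $\boldsymbol x^{TS}_n=\max_{m\in\mathcal P(n)}\lceil\max_{l\in\mathcal T_{t_m}}\boldsymbol B_{t_l}\boldsymbol y^{MSLP}_l\rceil-\max_{m\in\mathcal P(a(n))}\lceil\max_{l\in\mathcal T_{t_m}}\boldsymbol B_{t_l}\boldsymbol y^{MSLP}_l\rceil$ ($n\ne1$), $\eta^{TS}_n=\max_{m\in\mathcal C(n)}\{\boldsymbol f_{t_m}^{\mathsf T}\sum_{l\in\mathcal P(m)}\boldsymbol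 x^{TS}_l+\boldsymbol c_{t_m}^{\mathsf T}\boldsymbol y^{MSLP}_m-u^{MSLP}_m\}$ ($n\notin\mathcal L$). Then $$\mathrm{VMS}_R\le\mathrm{VMS}_R^{UB}:=\boldsymbol f_{t_1}^{\mathsf T}\big(\lceil\boldsymbol B_{t_1}\boldsymbol y^{MSLP}_1\rceil-\boldsymbol B_{t_1}\boldsymbol y^{MSLP}_1\big)+\sum_{n\in\mathcal T\setminus\{1\}}p_n(1-\lambda_{t_n})\boldsymbol f_{t_n}^{\mathsf T}\Big(\max_{m\in\mathcal P(n)}\big\lceil\max_{l\in\mathcal T_{t_m}}\boldsymbol B_{t_l}\boldsymbol y^{MSLP}_l\big\rceil-\max_{m\in\mathcal P(n)}\boldsymbol B_{t_m}\boldsymbol y^{MSLP}_m\Big)+\sum_{n\in\mathcal T\setminus\mathcal L}p_n\lambda_{t_n+1}\big(\eta^{TS}_n-\eta^{MS}_n\big).$$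
   Context: Setting. Fix integers $T\ge 2$ (periods), $M\ge1$ (facilities), $N\ge1$ (customer sites). For each period $t$: maintenance costs $f_{ti}\ge 0$ forming $\boldsymbol f_t\in\mathbb R^M$; operational costs $c_{tij}\ge0$ forming $\boldsymbol c_t\in\mathbb R^{MN}$; capacities $h_{ti}>0$. Vectors $\boldsymbol y\in\mathbb R^{MN}$ are indexed by pairs $(i,j)$; $(\boldsymbol A_t\boldsymbol y)_j=\sum_{i=1}^M y_{ij}$ defines $\boldsymbol A_t$ and $(\boldsymbol B_t\boldsymbol y)_i=\frac1{h_{ti}}\sum_{j=1}^N y_{ij}$ defines $\boldsymbol B_t$. Ceilings and maxima of vectors are componentwise. Scenario tree: a finite rooted tree with node set $\mathcal T$, root $1$, all root-to-leaf paths having $T$ nodes; $\mathcal T_t$ nodes at depth $t$, $t_n$ the period of $n$, $\mathcal L=\mathcal T_T$ the leaves, $a(n)$ the parent of $n\ne1$, $\mathcal C(n)$ the children of $n$, $\mathcal P(n)$ the nodes on the root-to-$n$ path (inclusive). Probabilities $p_n>0$ with $\sum_{n\in\mathcal T_t}p_n=1$ and $\sum_{m\in\mathcal C(n)}p_m=p_n$ ($n\notin\mathcal L$); demands $\boldsymbol d_n\in\mathbb R^N_{\ge0}$. Risk parameters $\lambda_t\in[0,1]$, $\alpha_t\in(0,1)$, $t=2,\ldots,T$. $\tilde{\boldsymbol f}_n=\boldsymbol f_{t_n}$ if $n=1$, else $(1-\lambda_{t_n})\boldsymbol f_{t_n}$; $\tilde{\boldsymbol c}_n=\boldsymbol c_{t_n}$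 if $n=1$, else $(1-\lambda_{t_n})\boldsymbol c_{t_n}$; $\tilde\lambda_n=0$ if $n\in\mathcal L$, else $\lambda_{t_n+1}$; $\tilde\alpha_n=0$ if $n=1$, else $\lambda_{t_n}/(1-\alpha_{t_n})$. Multistage model: $z^{MS}_R=\min\sum_{n\in\mathcal T}p_n\big(\tilde{\boldsymbol f}_n^{\mathsf T}\sum_{m\in\mathcal P(n)}\boldsymbol x_m+\tilde{\boldsymbol c}_n^{\mathsf T}\boldsymbol y_n+\tilde\lambda_n\eta_n+\tilde\alpha_nu_n\big)$ over $\boldsymbol x_n\in\mathbb Z^M_+$, $\boldsymbol y_n\in\mathbb R^{MN}_+$ ($n\in\mathcal T$), $\eta_n\in\mathbb R$ ($n\notin\mathcal L$), $u_n\ge0$ ($n\ne1$), subject to $\boldsymbol A_{t_n}\boldsymbol y_n=\boldsymbol d_n$, $\boldsymbol B_{t_n}\boldsymbol y_n\le\sum_{m\in\mathcal P(n)}\boldsymbol x_m$ ($n\in\mathcal T$) and $u_n+\eta_{a(n)}\ge\boldsymbol f_{t_n}^{\mathsf T}\sum_{m\in\mathcal P(n)}\boldsymbol x_m+\boldsymbol c_{t_n}^{\mathsf T}\boldsymbol y_n$ ($n\ne1$). Two-stage model: the multistage model plus the constraints $\boldsymbol x_m=\boldsymbol x_n$ for all $m,n\in\mathcal T_t$, $t=1,\ldots,T$; optimal value $z^{TS}_R$. $\mathrm{VMS}_R:=z^{TS}_R-z^{MS}_R$. *)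

(* Defs.v *)
From HB Require Import structures.
From mathcomp Require Import all_boot all_order all_algebra.
From mathcomp Require Import boolp classical_sets reals constructive_ereal ereal.
Set Implicit Arguments. Unset Strict Implicit. Unset Printing Implicit Defensive.
Import Order.TTheory GRing.Theory Num.Theory.
Local Open Scope ring_scope.

Section Model.
Variable R : realType.
Variable V : finType.          (* nodes of the scenario tree *)
Variable r : V.
Variable a : V -> V.           (* parent a(n) (value at the root irrelevant) *)
Variable tn : V -> nat.
Variable T M N : nat.

Definition anc (n : V) : {set V} :=
  [set m | [exists k : 'I_(tn n), iter k a n == m]].
Definition children (n : V) : {set V} := [set m | (m != r) && (a m == n)].
Definition level (t : nat) : {set V} := [set m | tn m == t].

Definition scenario_tree : Prop :=
  [/\ tn r = 1%N,
      (forall n, n != r -> tn n = (tn (a n)).+1),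
      (forall n, tn n = 1%N -> n = r),
      (forall n, (1 <= tn n <= T)%N) &
      (forall n, (tn n < T)%N -> exists m, m != r /\ a m = n)].

(* maximum of F over a (nonempty) finite set S; 0 by convention on set0 *)
Definition smax (S : {set V}) (F : V -> R) : R :=
  if [pick m in S] is Some m0 then \big[Num.max/F m0]_(m in S) F m else 0.

Definition ceilR (x : R) : R := (Num.ceil x)%:~R.

Variable f : nat -> 'I_M -> R.
Variable c : nat -> 'I_M -> 'I_N -> R.
Variable h : nat -> 'I_M -> R.
Variable p : V -> R.
Variable d : V -> 'I_N -> R.
Variable lam alp : nat -> R.

Definition Aop (y : 'I_M -> 'I_N -> R) (j : 'I_N) : R := \sum_(i < M) y i j.
Definition Bop (t : nat) (y : 'I_M -> 'I_N -> R) (i : 'I_M) : R :=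
  (\sum_(j < N) y i j) / h t i.

Definition cum (x : V -> 'I_M -> R) (n : V) (i : 'I_M) : R :=
  \sum_(m in anc n) x m i.

Definition cost (x : V -> 'I_M -> R) (y : V -> 'I_M -> 'I_N -> R) (n : V) : R :=
  \sum_(i < M) f (tn n) i * cum x n i
  + \sum_(i < M) \sum_(j < N) c (tn n) i j * y n i j.

Definition wfac (n : V) : R := if n == r then 1 else 1 - lam (tn n).
Definition lamtil (n : V) : R := if tn n == T then 0 else lam (tn n).+1.
Definition alptil (n : V) : R :=
  if n == r then 0 else lam (tn n) / (1 - alp (tn n)).

(* objective; eta_n (n leaf) and u_1 are dummy coordinates with weight 0 *)
Definition obj (x : V -> 'I_M -> R) (y : V -> 'I_M -> 'I_N -> R)
    (eta u : V -> R) : R :=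
  \sum_(n : V) p n *
    ( (\sum_(i < M) (wfac n * f (tn n) i) * cum x n i)
    + (\sum_(i < M) \sum_(j < N) (wfac n * c (tn n) i j) * y n i j)
    + lamtil n * eta n + alptil n * u n).

Definition feasLP (x : V -> 'I_M -> R) (y : V -> 'I_M -> 'I_N -> R)
    (eta u : V -> R) : Prop :=
  [/\ (forall n i, 0 <= x n i),
      (forall n i j, 0 <= y n i j),
      (forall n j, Aop (y n) j = d n j),
      (forall n i, Bop (tn n) (y n) i <= cum x n i) &
      (forall n, n != r -> 0 <= u n /\ cost x y n <= u n + eta (a n))].

Definition feasMS x y eta u : Prop :=
  feasLP x y eta u /\ (forall n i, x n i \is a Num.int).

Definition feasTS x y eta u : Prop :=
  feasMS x y eta u /\ (forall m n, tn m = tn n -> x m = x n).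

Definition zMS : \bar R :=
  ereal_inf [set z | exists x y eta u, feasMS x y eta u /\ z = (obj x y eta u)%:E].
Definition zTS : \bar R :=
  ereal_inf [set z | exists x y eta u, feasTS x y eta u /\ z = (obj x y eta u)%:E].
Definition VMS : \bar R := (zTS - zMS)%E.

Definition LPoptimal x y eta u : Prop :=
  feasLP x y eta u /\
  (forall x' y' eta' u', feasLP x' y' eta' u' -> obj x y eta u <= obj x' y' eta' u').

Section Construction.
Variable yLP : V -> 'I_M -> 'I_N -> R.
Variable uLP : V -> R.

Definition By (n : V) (i : 'I_M) : R := Bop (tn n) (yLP n) i.
Definition MB (n : V) (i : 'I_M) : R := smax (anc n) (fun m => By m i).
Definition CL (t : nat) (i : 'I_M) : R := ceilR (smax (level t) (fun l => By l i)).
Definition MC (n : V) (i : 'I_M) : R := smax (anc n) (fun m => CL (tn m) i).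

Definition xMS (n : V) (i : 'I_M) : R :=
  if n == r then By r i else MB n i - MB (a n) i.
Definition xTS (n : V) (i : 'I_M) : R :=
  if n == r then ceilR (By r i) else MC n i - MC (a n) i.
Definition etaMS (n : V) : R :=
  smax (children n) (fun m => cost xMS yLP m - uLP m).
Definition etaTS (n : V) : R :=
  smax (children n) (fun m => cost xTS yLP m - uLP m).

Definition VMS_UB : R :=
  \sum_(i < M) f (tn r) i * (ceilR (By r i) - By r i)
  + \sum_(n | n != r) p n * (1 - lam (tn n)) *
      (\sum_(i < M) f (tn n) i * (MC n i - MB n i))
  + \sum_(n | tn n != T) p n * lam (tn n).+1 * (etaTS n - etaMS n).
End Construction.

End Model.

(* Main.v *)
Require Import Defs.
From HB Require Import structures.
From mathcomp Require Import all_boot all_order all_algebra.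
From mathcomp Require Import boolp classical_sets reals constructive_ereal ereal.
From mathcomp Require Import zify ring.
Import Order.TTheory GRing.Theory Num.Theory.
Local Open Scope ring_scope.

Lemma smax_ub (R : realType) (V : finType) (S : {set V}) (F : V -> R) m :
  m \in S -> F m <= smax S F.
Proof.
move=> mS; rewrite /smax; case: pickP => [m0 Hm0|/(_ m)]; last by rewrite mS.
by rewrite (bigD1 m) //= le_max lexx.
Qed.

Lemma smax_lub (R : realType) (V : finType) (S : {set V}) (F : V -> R) B m0 :
  m0 \in S -> (forall m, m \in S -> F m <= B) -> smax S F <= B.
Proof.
move=> m0S HB; rewrite /smax; case: pickP => [m1 Hm1|/(_ m0)]; last by rewrite m0S.
apply: (big_ind (fun v => v <= B)); first exact: HB.
  by move=> x y hx hy; rewrite ge_max hx hy.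
by move=> i /HB.
Qed.

Lemma smax_in (R : realType) (V : finType) (S : {set V}) (F : V -> R) m0 :
  m0 \in S -> exists2 m, m \in S & smax S F = F m.
Proof.
move=> m0S; rewrite /smax; case: pickP => [m1 Hm1|/(_ m0)]; last by rewrite m0S.
apply: (big_ind (fun v => exists2 m, m \in S & v = F m)).
- by exists m1.
- move=> x y [mx hx ->] [my hy ->].
  have [le|lt] := leP (F mx) (F my).
    by exists my => //; rewrite max_r.
  by exists mx => //; rewrite max_l // ltW.
- by move=> i iS; exists i.
Qed.

Lemma smax_set1 (R : realType) (V : finType) (v : V) (F : V -> R) :
  smax [set v] F = F v.
Proof.
have [m] := @smax_in _ _ _ F _ (set11 v).
by rewrite finset.in_set1 => /eqP ->.
Qed.

Arguments smax_ub {R V S F m}.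
Arguments smax_lub {R V S F B m0}.
Arguments smax_in {R V S} F {m0}.

Theorem theorem2 (R : realType) (V : finType) (r : V) (a : V -> V) (tn : V -> nat)
    (T M N : nat)
    (f : nat -> 'I_M -> R) (c : nat -> 'I_M -> 'I_N -> R) (h : nat -> 'I_M -> R)
    (p : V -> R) (d : V -> 'I_N -> R) (lam alp : nat -> R)
    (xLP : V -> 'I_M -> R) (yLP : V -> 'I_M -> 'I_N -> R) (etaLP uLP : V -> R) :
  (2 <= T)%N -> (1 <= M)%N -> (1 <= N)%N ->
  scenario_tree r a tn T ->
  (forall t i, (1 <= t <= T)%N -> 0 <= f t i) ->
  (forall t i j, (1 <= t <= T)%N -> 0 <= c t i j) ->
  (forall t i, (1 <= t <= T)%N -> 0 < h t i) ->
  (forall n, 0 < p n) ->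
  (forall t, (1 <= t <= T)%N -> \sum_(n in level tn t) p n = 1) ->
  (forall n, (tn n < T)%N -> \sum_(m in children r a n) p m = p n) ->
  (forall n j, 0 <= d n j) ->
  (forall t, (2 <= t <= T)%N -> 0 <= lam t <= 1) ->
  (forall t, (2 <= t <= T)%N -> 0 < alp t < 1) ->
  LPoptimal r a tn T f c h p d lam alp xLP yLP etaLP uLP ->
  (VMS r a tn T f c h p d lam alp
     <= (VMS_UB r a tn T f c h p lam yLP uLP)%:E)%E.
Proof.
move=> T2 M1 N1 [tr1 tnS tn1 tnB tnC] fge cge hgt pgt psum pch dge lamB alpB.
move=> [[xge yge Ay Bx uc] opt].
have tnit : forall n k, (k < tn n)%N -> tn (iter k a n) = (tn n - k)%N.
  move=> n; elim=> [|k IH] Hk; first by rewrite subn0.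
  rewrite iterS; have := IH (ltnW Hk); set w := iter k a n => Hw.
  have wr : w != r.
    by apply/eqP => E; move: Hw; rewrite E tr1 => H; lia.
  by move: Hw; rewrite (tnS w wr); lia.
have ancP : forall n m, reflect (exists2 k, (k < tn n)%N & iter k a n = m)
                               (m \in anc a tn n).
  move=> n m; rewrite inE; apply: (iffP existsP) => [[k /eqP <-]|[k Hk <-]].
    by exists k.
  by exists (Ordinal Hk).
have ancn : forall n, n \in anc a tn n.
  by move=> n; apply/ancP; exists 0%N => //; case/andP: (tnB n).
have anc_tn : forall n m, m \in anc a tn n -> (tn m <= tn n)%N.
  by move=> n m /ancP [k Hk <-]; rewrite tnit //; lia.
have anc_trans : forall n m l, m \in anc a tn n -> l \in anc a tn m ->
    l \in anc a tn n.
  move=> n m l /ancP [k Hk <-] /ancP [k' Hk' <-]; apply/ancP; exists (k' + k)%N.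
    by move: Hk'; rewrite tnit //; lia.
  by rewrite iterD.
have ancS : forall n, n != r -> anc a tn n = n |: anc a tn (a n).
  move=> n nr; apply/setP => m; rewrite in_setU1; apply/idP/idP.
    move/ancP=> [[|k] Hk <-]; first by rewrite eqxx.
    apply/orP; right; apply/ancP; exists k; last by rewrite iterSr.
    by move: Hk; rewrite (tnS n nr); lia.
  case/orP => [/eqP -> | /ancP [k Hk <-]]; first exact: ancn.
  apply/ancP; exists k.+1; last by rewrite iterSr.
  by rewrite (tnS n nr); lia.
have anc_a : forall n, n != r -> a n \in anc a tn n.
  by move=> n nr; rewrite ancS // setU1r // ancn.
have ancr : anc a tn r = [set r].
  apply/setP => m; rewrite finset.in_set1; apply/ancP/eqP => [[k Hk <-]| ->].
    by move: Hk; rewrite tr1; case: k.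
  by exists 0%N; rewrite ?tr1.
have nanc : forall n, n != r -> n \notin anc a tn (a n).
  by move=> n nr; apply/negP => /anc_tn; rewrite (tnS n nr); lia.
have lev1 : level tn 1 = [set r].
  by apply/setP => m; rewrite !inE; apply/eqP/eqP => [/tn1 | ->].
have pr1 : p r = 1.
  by rewrite -(psum 1%N) ?lev1 ?big_set1 //; apply/andP; split; lia.
have tele : forall (x G : V -> 'I_M -> R) i, x r i = G r i ->
    (forall n, n != r -> x n i = G n i - G (a n) i) ->
    forall n, cum a tn x n i = G n i.
  move=> x G i Hr Hn.
  suff H : forall k n, (tn n <= k)%N -> cum a tn x n i = G n i.
    by move=> n; apply: (H (tn n)).
  elim=> [|k IH] n Hk; first by have := tnB n; lia.
  case: (eqVneq n r) => [-> | nr]; first by rewrite /cum ancr big_set1 Hr.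
  rewrite /cum (ancS n nr) big_setU1 ?nanc //=.
  have := IH (a n); rewrite /cum => ->; last by move: Hk; rewrite (tnS n nr); lia.
  by rewrite Hn // subrK.

set Xts := xTS r a tn h yLP.
set Xms := xMS r a tn h yLP.
set Ets := etaTS r a tn f c h yLP uLP.
set Ems := etaMS r a tn f c h yLP uLP.
have Byge : forall n i, 0 <= By tn h yLP n i.
  move=> n i; rewrite /By /Bop; apply: divr_ge0.
    by apply: sumr_ge0 => j _; apply: yge.
  by apply: ltW; apply: hgt; apply: tnB.
have MBr : forall i, MB a tn h yLP r i = By tn h yLP r i.
  by move=> i; rewrite /MB ancr smax_set1.
have MCr : forall i, MC a tn h yLP r i = ceilR (By tn h yLP r i).
  by move=> i; rewrite /MC ancr smax_set1 /CL tr1 lev1 smax_set1.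
have cumMS : forall n i, cum a tn Xms n i = MB a tn h yLP n i.
  move=> n i; apply: tele => [|m mr]; first by rewrite /Xms /xMS eqxx MBr.
  by rewrite /Xms /xMS (negbTE mr).
have cumTS : forall n i, cum a tn Xts n i = MC a tn h yLP n i.
  move=> n i; apply: tele => [|m mr]; first by rewrite /Xts /xTS eqxx MCr.
  by rewrite /Xts /xTS (negbTE mr).
have cum_mono : forall n m i, m \in anc a tn n ->
    cum a tn xLP m i <= cum a tn xLP n i.
  move=> n m i mn; rewrite /cum [X in _ <= X](big_setID (anc a tn m)).
  have -> : anc a tn n :&: anc a tn m = anc a tn m.
    apply/finset.setIidPr/fintype.subsetP => l; exact: anc_trans.
  rewrite lerDl; apply: sumr_ge0 => l _; exact: xge.
have MB_le : forall n i, MB a tn h yLP n i <= cum a tn xLP n i.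
  move=> n i; rewrite /MB; apply: (smax_lub (ancn n)) => m mn.
  apply: le_trans (cum_mono _ _ _ mn); exact: Bx.
have cost_mono : forall (x1 x2 : V -> 'I_M -> R) y m,
    (forall i, cum a tn x1 m i <= cum a tn x2 m i) ->
    cost a tn f c x1 y m <= cost a tn f c x2 y m.
  move=> x1 x2 y m H; rewrite /cost lerD2r; apply: ler_sum => i _.
  by apply: ler_wpM2l => //; apply: fge.
have tn2 : forall n, n != r -> (2 <= tn n <= T)%N.
  by move=> n nr; have := tnB n; have := tnB (a n); rewrite (tnS n nr); lia.
have objLP_ge : obj r a tn T f c p lam alp Xms yLP Ems uLP
                <= obj r a tn T f c p lam alp xLP yLP etaLP uLP.
  rewrite /obj; apply: ler_sum => n _; apply: ler_wpM2l; first exact: ltW.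
  apply: lerD => //; apply: lerD; first apply: lerD => //.
    apply: ler_sum => i _; apply: ler_wpM2l; last by rewrite cumMS.
    apply: mulr_ge0; last exact: fge.
    rewrite /wfac; case: eqP => [_|/eqP nr] //.
    by rewrite subr_ge0; have /lamB /andP[] := tn2 n nr.
  rewrite /lamtil; case: eqP => HT; first by rewrite !mul0r.
  have HT' : (tn n < T)%N by have := tnB n; lia.
  apply: ler_wpM2l; first by have /andP[] : (0 <= lam (tn n).+1 <= 1) by apply: lamB; have := tnB n; lia.
  have [m0 [m0r am0]] := tnC n HT'.
  have m0c : m0 \in children r a n by rewrite inE m0r am0 eqxx.
  rewrite /Ems /etaMS; apply: (smax_lub m0c) => m; rewrite inE => /andP [mr /eqP amn].
  rewrite lerBlDl; have [_ +] := uc m mr; rewrite amn; apply: le_trans.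
  by apply: cost_mono => i; rewrite cumMS.

have MCle : forall m n i, tn m = tn n -> MC a tn h yLP m i <= MC a tn h yLP n i.
  move=> m n i Hmn; rewrite /MC; apply: (smax_lub (ancn m)) => l /ancP [k Hk <-].
  have Hk' : (k < tn n)%N by rewrite -Hmn.
  rewrite (_ : tn (iter k a m) = tn (iter k a n)); last by rewrite !tnit // Hmn.
  by apply: (smax_ub (F := fun m => CL tn h yLP (tn m) i)); apply/ancP; exists k.
have MC_int : forall n i, MC a tn h yLP n i \is a Num.int.
  move=> n i; rewrite /MC; have [m _ ->] := smax_in (fun m => CL tn h yLP (tn m) i) (ancn n).
  exact: intr_int.
have By_MC : forall n i, By tn h yLP n i <= MC a tn h yLP n i.
  move=> n i; rewrite /MC.
  apply: le_trans (smax_ub (F := fun m => CL tn h yLP (tn m) i) (ancn n)).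
  rewrite /CL /ceilR; apply: le_trans (ceil_ge _).
  by apply: (smax_ub (F := fun l => By tn h yLP l i)); rewrite inE.
have feas : feasTS r a tn f c h d Xts yLP Ets uLP.
  split; first split; first split.
  - move=> n i; rewrite /Xts /xTS; case: eqP => [_|/eqP nr].
      by apply: le_trans (Byge r i) _; apply: ceil_ge.
    set F0 := (fun m => CL tn h yLP (tn m) i).
    rewrite subr_ge0 /MC; apply: (smax_lub (ancn (a n))) => m mn /=.
    by apply: (smax_ub (F := fun m => CL tn h yLP (tn m) i)); apply: anc_trans mn; apply: anc_a.
  - exact: yge.
  - exact: Ay.
  - by move=> n i; rewrite cumTS; apply: By_MC.
  - move=> n nr; split; first by have [] := uc n nr.
    rewrite -lerBlDl; apply: (smax_ub (F := fun m => cost a tn f c Xts yLP m - uLP m)).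
    by rewrite inE nr eqxx.
  - move=> n i; rewrite /Xts /xTS; case: eqP => _; first exact: intr_int.
    by apply: rpredB.
  - move=> m n Hmn; apply: funext => i; rewrite /Xts /xTS.
    case: (eqVneq m r) => [mr|mr]; case: (eqVneq n r) => [nr|nr].
    + by subst.
    + by subst; move: Hmn; rewrite tr1 => /esym /tn1 E; rewrite E eqxx in nr.
    + by subst; move: Hmn; rewrite tr1 => /tn1 E; rewrite E eqxx in mr.
    have Ha : tn (a m) = tn (a n).
      by have := tnS m mr; have := tnS n nr; rewrite Hmn; lia.
    have E1 : MC a tn h yLP m i = MC a tn h yLP n i.
      by apply/le_anti/andP; split; apply: MCle.
    have E2 : MC a tn h yLP (a m) i = MC a tn h yLP (a n) i.
      by apply/le_anti/andP; split; apply: MCle.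
    by rewrite E1 E2.

have zTS_le : (zTS r a tn T f c h p d lam alp
               <= (obj r a tn T f c p lam alp Xts yLP Ets uLP)%:E)%E.
  by apply: ereal_inf_lbound; exists Xts, yLP, Ets, uLP; split.
have zMS_ge : ((obj r a tn T f c p lam alp xLP yLP etaLP uLP)%:E
               <= zMS r a tn T f c h p d lam alp)%E.
  apply: le_ereal_inf_tmp => z [x [y [e [u [[Hf _] ->]]]]].
  by rewrite lee_fin; apply: opt.
apply: le_trans (leeB zTS_le zMS_ge) _.
rewrite -EFinB lee_fin.
apply: le_trans (lerB (lexx _) objLP_ge) _.
rewrite le_eqVlt; apply/orP; left; apply/eqP.
have E : obj r a tn T f c p lam alp Xts yLP Ets uLP
         - obj r a tn T f c p lam alp Xms yLP Ems uLP
  = \sum_n p n * (\sum_(i < M) wfac r tn lam n * f (tn n) i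
                     * (MC a tn h yLP n i - MB a tn h yLP n i))
    + \sum_n p n * lamtil tn T lam n * (Ets n - Ems n).
  rewrite /obj -sumrB -big_split; apply: eq_bigr => n _ /=.
  have HA : \sum_(i < M) wfac r tn lam n * f (tn n) i * cum a tn Xts n i
          - \sum_(i < M) wfac r tn lam n * f (tn n) i * cum a tn Xms n i
          = \sum_(i < M) wfac r tn lam n * f (tn n) i
                     * (MC a tn h yLP n i - MB a tn h yLP n i).
    by rewrite -sumrB; apply: eq_bigr => i _; rewrite cumTS cumMS mulrBr.
  rewrite -HA; ring.
rewrite E /VMS_UB; congr (_ + _).
  rewrite (bigD1 r) //= /wfac eqxx pr1 mul1r; congr (_ + _).
    by apply: eq_bigr => i _; rewrite MCr MBr mul1r.
  apply: eq_bigr => n nr; rewrite (negbTE nr) -mulrA; congr (_ * _).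
  by rewrite mulr_sumr; apply: eq_bigr => i _; rewrite mulrA.
rewrite [RHS]big_mkcond /=; apply: eq_bigr => n _; rewrite /lamtil.
by case: eqP => _ /=; rewrite ?mulr0 ?mul0r.
Qed.
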